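(* Let $d\ge 1$, $\mathbf{n}=(n_1,\ldots,n_d)$ be positive integers, and let $\mathbf{M}=\{\mathbf{m}^{(1)},\ldots,\mathbf{m}^{(d)}\}$ be a blocking of $\mathcal{A}\in\mathbb{R}^{n_1\times\cdots\times n_d}$ with $\mathbf{m}^{(k)}=[m^{(k)}_1,\ldots,m^{(k)}_{b_k}]$ for $k=1,\ldots,d$, and write $\mathbf{b}=(b_1,\ldots,b_d)$. For $k=1,\ldots,d$ set $N_k=n_1\cdots n_k$ and $\mathbf{M}_k=\{\mathbf{m}^{(1)},\ldots,\mathbf{m}^{(k)}\}$ (a blocking of tensors of size $n_1\times\cdots\times n_k$), and define \[ Q_k=\begin{cases} I_{N_d} & k=1,\\ I_{N_d/N_k}\otimes \Gamma^{(k)} & 1<k\le d,\end{cases} \] where $N_d/N_k=n_{k+1}\cdots n_d$, $\Gamma^{(k)}=\mathrm{diag}(\Gamma^{(k)}_1,\ldots,\Gamma^{(k)}_{b_k})$, and \[ \Gamma^{(k)}_j=\mathrm{diag}\big(\ldots,\Pi_{\mathrm{vol}_{\mathbf{M}_{k-1}}(\mathbf{i}),\,m^{(k)}_j},\ldots\big)\cdot \Pi_{m^{(k)}_j,\,N_{k-1}}, \] the block diagonal matrix having one diagonal block for each multi-index $\mathbf{1}\le\mathbf{i}\le\mathbf{b}(1:k-1)$, with the diagonal blocks ordered by increasing $\mathrm{ivec}(\mathbf{i},\mathbf{b}(1:k-1))$. Then the permutation matrix $P_{\mathbf{M}}=Q_dQ_{d-1}\cdots Q_2Q_1$ satisfies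 \[ \mathrm{vec}_{\mathbf{M}}(\mathcal{A})=P_{\mathbf{M}}\,\mathrm{vec}(\mathcal{A}). \]
   Context: Multi-index conventions: for integer vectors $\mathbf{i},\mathbf{j}$ of equal length, $\mathbf{i}\le\mathbf{j}$ means componentwise; $\mathbf{1}$ is the all-ones vector; $\mathbf{b}(1:k-1)=(b_1,\ldots,b_{k-1})$. For $\mathbf{n}=(n_1,\ldots,n_d)$ and $\mathbf{1}\le\mathbf{i}\le\mathbf{n}$, $\mathrm{ivec}(\mathbf{i},\mathbf{n})=i_1+(i_2-1)n_1+(i_3-1)n_1n_2+\cdots+(i_d-1)n_1\cdots n_{d-1}$. For $\mathcal{A}\in\mathbb{R}^{n_1\times\cdots\times n_d}$, $\mathrm{vec}(\mathcal{A})\in\mathbb{R}^{n_1\cdots n_d}$ is the column vector with entry $\mathrm{ivec}(\mathbf{i},\mathbf{n})$ equal to $\mathcal{A}(\mathbf{i})$ (for matrices, it stacks columns). Perfect shuffle: for positive integers $q,r$ and $s=qr$, $\Pi_{q,r}\in\mathbb{R}^{s\times s}$ is the permutation matrix with $\Pi_{q,r}z=[z(1:r:s);z(2:r:s);\ldots;z(r:r:s)]$ for $z\in\mathbb{R}^s$, where $a:c:b$ denotes $a,a+c,a+2c,\ldots$ up to $b$. $\otimes$ is the Kronecker product and $\mathrm{diag}(\cdot)$ the block diagonal matrix. A blocking of $\mathcal{A}\in\mathbb{R}^{n_1\times\cdots\times n_d}$ is a collection $\mathbf{M}=\{\mathbf{m}^{(1)},\ldots,\mathbf{m}^{(d)}\}$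 where $\mathbf{m}^{(k)}=[m^{(k)}_1,\ldots,m^{(k)}_{b_k}]$ is a vector of positive integers summing to $n_k$. With $\ell^{(k)}_j=m^{(k)}_1+\cdots+m^{(k)}_{j-1}+1$ and $u^{(k)}_j=m^{(k)}_1+\cdots+m^{(k)}_j$, the block $\mathbf{i}$ ($\mathbf{1}\le\mathbf{i}\le\mathbf{b}$) is $\mathcal{A}_{\mathbf{i}}=\mathcal{A}(\ell^{(1)}_{i_1}:u^{(1)}_{i_1},\ldots,\ell^{(d)}_{i_d}:u^{(d)}_{i_d})$, and $\mathrm{vol}_{\mathbf{M}}(\mathbf{i})=m^{(1)}_{i_1}\cdots m^{(d)}_{i_d}$ (for $\mathbf{M}_0$, the empty blocking, $\mathrm{vol}=1$ and $N_0=1$). $\mathrm{vec}_{\mathbf{M}}(\mathcal{A})$ is the vector obtained by stacking $\mathrm{vec}(\mathcal{A}_{\mathbf{i}})$ over all $\mathbf{1}\le\mathbf{i}\le\mathbf{b}$, in order of increasing $\mathrm{ivec}(\mathbf{i},\mathbf{b})$. *)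

(* Defs.v *)
(* All indices below are 0-based. *)
From mathcomp Require Import all_boot all_order all_algebra.
Set Implicit Arguments. Unset Strict Implicit. Unset Printing Implicit Defensive.
Import GRing.Theory.
Local Open Scope ring_scope.

Definition Nprod (n : nat -> nat) (k : nat) : nat := (\prod_(j < k) n j)%N.

Definition ivec (n : nat -> nat) (i : seq nat) : nat :=
  (\sum_(k < size i) nth 0 i k * Nprod n k)%N.

(* the multi-index (of length k) with ivec equal to p, p < Nprod n k
   (mixed-radix digits of p); it enumerates multi-indices in order of
   increasing ivec *)
Definition idecode (n : nat -> nat) (k p : nat) : seq nat :=
  mkseq (fun j => (p %/ Nprod n j) %% n j)%N k.

(* a blocking is m : nat -> seq nat, m k = [m^(k)_0, ..., m^(k)_(b_k - 1)] *)
Definition bcount (m : nat -> seq nat) : nat -> nat := fun k => size (m k).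

Definition vol (m : nat -> seq nat) (i : seq nat) : nat :=
  (\prod_(k < size i) nth 0 (m k) (nth 0 i k))%N.

Fixpoint blk (s : seq nat) (x : nat) : nat * nat :=
  match s with
  | [::] => (0%N, x)
  | a :: s' => if (x < a)%N then (0%N, x)
               else let jr := blk s' (x - a) in (jr.1.+1, jr.2)
  end.

Definition blkidx (m : nat -> seq nat) (g : seq nat) : seq nat :=
  [seq (blk (m k) (nth 0 g k)).1 | k <- iota 0 (size g)].
Definition blkoff (m : nat -> seq nat) (g : seq nat) : seq nat :=
  [seq (blk (m k) (nth 0 g k)).2 | k <- iota 0 (size g)].

(* position of entry A(g) in vec_M(A): the total volume of the blocks
   preceding block beta (in ivec(., b) order), plus the position of the
   local offset inside vec(A_beta) *)
Definition posM (m : nat -> seq nat) (g : seq nat) : nat :=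
  let beta := blkidx m g in
  ((\sum_(t < ivec (bcount m) beta) vol m (idecode (bcount m) (size g) t))
   + ivec (fun k => nth 0 (m k) (nth 0 beta k)) (blkoff m g))%N.

Section Vec.
Variable R : pzRingType.

(* vec(A): entry ivec(i, n) is A(i) *)
Definition tvec (d : nat) (n : nat -> nat) (A : seq nat -> R) : 'cV[R]_(Nprod n d) :=
  \col_(p < Nprod n d) A (idecode n d p).

(* vec_M(A): stacking of vec(A_beta); entry posM(g) is A(g) *)
Definition tvecM (d : nat) (n : nat -> nat) (m : nat -> seq nat)
    (A : seq nat -> R) : 'cV[R]_(Nprod n d) :=
  \col_(p < Nprod n d)
     \sum_(q < Nprod n d) ((posM m (idecode n d q) == p)%:R * A (idecode n d q)).

Record smx := Smx { msz : nat; ment : nat -> nat -> R }.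

Definition mid (s : nat) : smx :=
  Smx s (fun o i => ((o < s)%N && (o == i))%:R).

Definition mmul (A B : smx) : smx :=
  Smx (msz A) (fun o i => \sum_(t < msz A) ment A o t * ment B t i).

Definition mshuffle (q r : nat) : smx :=
  Smx (q * r) (fun o i =>
    [&& (o < q * r)%N, (i < q * r)%N & (i == (o %% q) * r + o %/ q)%N]%:R).

Definition mkron_id (a : nat) (G : smx) : smx :=
  let s := msz G in
  Smx (a * s) (fun o i =>
    if [&& (o < a * s)%N, (i < a * s)%N & (o %/ s == i %/ s)%N]
    then ment G (o %% s) (i %% s) else 0).

Fixpoint mbdiag (l : seq smx) : smx :=
  match l with
  | [::] => Smx 0 (fun _ _ => 0)
  | G :: l' =>
      let D := mbdiag l' in
      let s := msz G in
      Smx (s + msz D) (fun o i =>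
        if (o < s)%N then (if (i < s)%N then ment G o i else 0)
        else if (s <= i)%N then ment D (o - s) (i - s) else 0)
  end.

Definition tomx (s : nat) (P : smx) : 'M[R]_s := \matrix_(o < s, i < s) ment P o i.

(* ---------- the factors Q_k (0-based mode k, i.e. paper's Q_(k+1)) ---------- *)
Definition Gammaj (n : nat -> nat) (m : nat -> seq nat) (k j : nat) : smx :=
  let mj := nth 0 (m k) j in
  mmul (mbdiag [seq mshuffle (vol m (idecode (bcount m) k t)) mj
               | t <- iota 0 (Nprod (bcount m) k)])
       (mshuffle mj (Nprod n k)).

Definition Gamma (n : nat -> nat) (m : nat -> seq nat) (k : nat) : smx :=
  mbdiag [seq Gammaj n m k j | j <- iota 0 (size (m k))].

Definition Qk (d : nat) (n : nat -> nat) (m : nat -> seq nat) (k : nat) : smx :=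
  if k == 0%N then mid (Nprod n d)
  else mkron_id (\prod_(k.+1 <= j < d) n j)%N (Gamma n m k).

Fixpoint prodQ (d : nat) (n : nat -> nat) (m : nat -> seq nat) (k : nat) : smx :=
  match k with
  | 0 => mid (Nprod n d)
  | 1 => Qk d n m 0
  | k'.+1 => mmul (Qk d n m k') (prodQ d n m k')
  end.

Definition PM (d : nat) (n : nat -> nat) (m : nat -> seq nat) : smx := prodQ d n m d.

End Vec.

Arguments tvec {R} d n A.
Arguments tvecM {R} d n m A.
Arguments mid {R} s.
Arguments mshuffle {R} q r.
Arguments Gammaj {R} n m k j.
Arguments Gamma {R} n m k.
Arguments Qk {R} d n m k.
Arguments prodQ {R} d n m k.
Arguments PM {R} d n m.
Arguments tomx {R} s P.

(* Main.v *)
Require Import Defs.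
From mathcomp Require Import all_boot all_order all_algebra.
From mathcomp Require Import zify.
Set Implicit Arguments. Unset Strict Implicit. Unset Printing Implicit Defensive.
Import GRing.Theory.

Open Scope nat_scope.

Lemma NprodS c k : Nprod c k.+1 = Nprod c k * c k.
Proof. by rewrite /Nprod big_ord_recr. Qed.

Lemma Nprod0 c : Nprod c 0 = 1.
Proof. by rewrite /Nprod big_ord0. Qed.

Lemma Nprod_gt0 c k : (forall l, l < k -> 0 < c l) -> 0 < Nprod c k.
Proof.
elim: k => [|k IH] H; first by rewrite Nprod0.
rewrite NprodS muln_gt0 IH ?H //= => l Hl; apply: H; exact: ltnW.
Qed.

Lemma Nprod_eq c c' k : (forall l, l < k -> c l = c' l) -> Nprod c k = Nprod c' k.
Proof. by move=> H; rewrite /Nprod; apply: eq_bigr => i _; apply: H. Qed.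

Lemma Nprod_dvd c j k : j <= k -> Nprod c j %| Nprod c k.
Proof.
elim: k => [|k IH]; first by rewrite leqn0 => /eqP ->.
rewrite leq_eqVlt => /orP [/eqP -> //| Hj].
by rewrite NprodS dvdn_mulr // IH.
Qed.

Lemma digit_shift c j k p a : j < k -> 0 < Nprod c j ->
  ((p + Nprod c k * a) %/ Nprod c j) %% c j = (p %/ Nprod c j) %% c j.
Proof.
move=> Hjk Hp.
have /dvdnP [X HX] : Nprod c j.+1 %| Nprod c k by apply: Nprod_dvd.
rewrite HX NprodS.
have -> : p + X * (Nprod c j * c j) * a = (X * a * c j) * Nprod c j + p.
  by nia.
by rewrite divnMDl // modnMDl.
Qed.

Lemma idecodeS c k p : idecode c k.+1 p = rcons (idecode c k p) ((p %/ Nprod c k) %% c k).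
Proof. by rewrite /idecode mkseqS. Qed.

Lemma idecode_shift c k p a : (forall l, l < k -> 0 < c l) ->
  idecode c k (p + Nprod c k * a) = idecode c k p.
Proof.
move=> H; rewrite /idecode /mkseq; apply/eq_in_map => l.
rewrite mem_iota add0n => Hl.
apply: digit_shift => //; apply: Nprod_gt0 => l' Hl'; apply: H.
exact: ltn_trans Hl' Hl.
Qed.

Lemma idecode_rcons_val c k t j : (forall l, l < k -> 0 < c l) ->
  t < Nprod c k -> j < c k ->
  idecode c k.+1 (t + Nprod c k * j) = rcons (idecode c k t) j.
Proof.
move=> H Ht Hj; rewrite idecodeS idecode_shift //; congr rcons.
have Hp : 0 < Nprod c k by exact: Nprod_gt0.
by rewrite mulnC addnC divnMDl // divn_small // addn0 modn_small.
Qed.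

Lemma ivec_rcons c s a : ivec c (rcons s a) = ivec c s + a * Nprod c (size s).
Proof.
rewrite /ivec size_rcons big_ord_recr /= nth_rcons ltnn eqxx; congr (_ + _).
by apply: eq_bigr => i _; rewrite nth_rcons ltn_ord.
Qed.

Lemma ivec_eq c c' s : (forall l, l < size s -> c l = c' l) -> ivec c s = ivec c' s.
Proof.
move=> H; rewrite /ivec; apply: eq_bigr => i _; congr (_ * _).
apply: Nprod_eq => l Hl; apply: H; exact: ltn_trans Hl (ltn_ord i).
Qed.

Lemma ivec_lt c s : (forall l, l < size s -> nth 0 s l < c l) ->
  ivec c s < Nprod c (size s).
Proof.
elim/last_ind: s => [|s a IH] H; first by rewrite /ivec big_ord0 Nprod0.
rewrite ivec_rcons size_rcons NprodS.
have H1 : forall l, l < size s -> nth 0 s l < c l.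
  move=> l Hl; move: (H l); rewrite size_rcons nth_rcons Hl; apply; exact: ltnW.
have Ha : a < c (size s) by move: (H (size s)); rewrite size_rcons nth_rcons ltnn eqxx; apply.
have := IH H1.
set P := Nprod c (size s); set v := ivec c s => Hv.
have : v + a * P < P + a * P by rewrite ltn_add2r.
move/leq_trans; apply. rewrite -mulSn mulnC leq_mul2l Ha orbT //.
Qed.

Lemma idecode_ivec c s : (forall l, l < size s -> nth 0 s l < c l) ->
  idecode c (size s) (ivec c s) = s.
Proof.
elim/last_ind: s => [|s a IH] H; first by [].
have H1 : forall l, l < size s -> nth 0 s l < c l.
  move=> l Hl; move: (H l); rewrite size_rcons nth_rcons Hl; apply; exact: ltnW.
have Ha : a < c (size s) by move: (H (size s)); rewrite size_rcons nth_rcons ltnn eqxx; apply.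
have Hpos : forall l, l < size s -> 0 < c l.
  by move=> l Hl; apply: leq_ltn_trans (H1 l Hl).
rewrite ivec_rcons size_rcons mulnC idecode_rcons_val // ?IH //.
exact: ivec_lt.
Qed.

Lemma vol_rcons m s a : vol m (rcons s a) = vol m s * nth 0 (m (size s)) a.
Proof.
rewrite /vol size_rcons big_ord_recr /= nth_rcons ltnn eqxx; congr (_ * _).
by apply: eq_bigr => i _; rewrite nth_rcons ltn_ord.
Qed.

Lemma blk_spec s x : x < sumn s ->
  [/\ (blk s x).1 < size s, (blk s x).2 < nth 0 s (blk s x).1
    & x = sumn (take (blk s x).1 s) + (blk s x).2].
Proof.
elim: s x => [|a s IH] x //= Hx.
case: ifP => Hxa /=; first by rewrite add0n.
have Hx' : x - a < sumn s by rewrite ltn_subLR // leqNgt Hxa.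
have [H1 H2 H3] := IH _ Hx'.
split => //; rewrite -addnA -H3 subnKC // leqNgt Hxa //.
Qed.

Lemma sumn_take_big s j : sumn (take j s) = \sum_(i < j) nth 0 s i.
Proof.
elim: s j => [|a s IH] j.
  by rewrite /= big1 // => i _; rewrite nth_nil.
case: j => [|j]; first by rewrite big_ord0.
by rewrite /= big_ord_recl /= IH.
Qed.

Lemma sumn_map_iota (f : nat -> nat) p :
  sumn [seq f t | t <- iota 0 p] = \sum_(t < p) f t.
Proof.
elim: p => [|p IH]; first by rewrite big_ord0.
rewrite big_ord_recr -IH.
have -> : iota 0 p.+1 = iota 0 p ++ [:: p] by rewrite -addn1 iotaD.
by rewrite map_cat sumn_cat /= addn0.
Qed.

Lemma sum_split (F : nat -> nat) a r :
  \sum_(t < a + r) F t = \sum_(t < a) F t + \sum_(t < r) F (a + t).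
Proof. by rewrite big_split_ord. Qed.

Section Blocks.
Variable D : nat.
Variable n : nat -> nat.
Variable m : nat -> seq nat.
Hypothesis Hn : forall l, l < D -> 0 < n l.
Hypothesis Hsum : forall l, l < D -> sumn (m l) = n l.

Local Notation b := (bcount m).

Definition Ssum k p := \sum_(t < p) vol m (idecode b k t).

Lemma b_pos l : l < D -> 0 < b l.
Proof.
move=> Hl; have := Hn Hl; rewrite -Hsum // /bcount; by case: (m l).
Qed.

Lemma b_pos_k k : k <= D -> forall l, l < k -> 0 < b l.
Proof. move=> Hk l Hl; apply: b_pos; exact: leq_trans Hl Hk. Qed.

Lemma size_idecode c k p : size (idecode c k p) = k.
Proof. by rewrite /idecode size_mkseq. Qed.

Lemma Ssum_step k j r : k < D -> j < b k -> r <= Nprod b k ->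
  Ssum k.+1 (Nprod b k * j + r) = Ssum k.+1 (Nprod b k * j) + Ssum k r * nth 0 (m k) j.
Proof.
move=> Hk Hj Hr; rewrite /Ssum big_split_ord /=; congr (_ + _).
rewrite big_distrl /=; apply: eq_bigr => t _.
rewrite addnC idecode_rcons_val ?vol_rcons ?size_idecode //.
- apply: b_pos_k; exact: ltnW.
- exact: leq_trans (ltn_ord t) Hr.
Qed.

Lemma Ssum_blocks k j : k < D -> j <= b k ->
  Ssum k.+1 (Nprod b k * j) = Ssum k (Nprod b k) * sumn (take j (m k)).
Proof.
move=> Hk; elim: j => [|j IH] Hj.
  by rewrite muln0 /Ssum big_ord0 take0 muln0.
rewrite mulnS addnC Ssum_step // IH ?(ltnW Hj) // (take_nth 0) // sumn_rcons mulnDr.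
done.
Qed.

Lemma Ssum_total k : k <= D -> Ssum k (Nprod b k) = Nprod n k.
Proof.
elim: k => [|k IH] Hk.
  by rewrite /Ssum Nprod0 big_ord1 Nprod0 /vol /= big_ord0.
rewrite NprodS Ssum_blocks // IH ?(ltnW Hk) // /bcount take_size Hsum //.
by rewrite NprodS.
Qed.

Lemma size_blkidx g : size (blkidx m g) = size g.
Proof. by rewrite /blkidx size_map size_iota. Qed.
Lemma size_blkoff g : size (blkoff m g) = size g.
Proof. by rewrite /blkoff size_map size_iota. Qed.

Lemma nth_blkidx g l : l < size g -> nth 0 (blkidx m g) l = (blk (m l) (nth 0 g l)).1.
Proof. by move=> Hl; rewrite /blkidx (nth_map 0) ?size_iota // nth_iota. Qed.
Lemma nth_blkoff g l : l < size g -> nth 0 (blkoff m g) l = (blk (m l) (nth 0 g l)).2.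
Proof. by move=> Hl; rewrite /blkoff (nth_map 0) ?size_iota // nth_iota. Qed.

Lemma blkidx_rcons h x : blkidx m (rcons h x) = rcons (blkidx m h) (blk (m (size h)) x).1.
Proof.
rewrite /blkidx size_rcons -addn1 iotaD map_cat /= cats1 add0n nth_rcons ltnn eqxx.
congr rcons; apply/eq_in_map => l; rewrite mem_iota add0n /= => Hl.
by rewrite nth_rcons Hl.
Qed.
Lemma blkoff_rcons h x : blkoff m (rcons h x) = rcons (blkoff m h) (blk (m (size h)) x).2.
Proof.
rewrite /blkoff size_rcons -addn1 iotaD map_cat /= cats1 add0n nth_rcons ltnn eqxx.
congr rcons; apply/eq_in_map => l; rewrite mem_iota add0n /= => Hl.
by rewrite nth_rcons Hl.
Qed.

Definition bsz (beta : seq nat) := fun l => nth 0 (m l) (nth 0 beta l).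
Definition loc h := ivec (bsz (blkidx m h)) (blkoff m h).

Lemma posM_dec h : posM m h = Ssum (size h) (ivec b (blkidx m h)) + loc h.
Proof. by []. Qed.

Definition valid h := size h <= D /\ forall l, l < size h -> nth 0 h l < n l.

Lemma valid_blk h l : valid h -> l < size h ->
  nth 0 (blkidx m h) l < b l /\
  nth 0 (blkoff m h) l < bsz (blkidx m h) l.
Proof.
move=> [Hs Hh] Hl.
have Hl' : l < D by exact: leq_trans Hl Hs.
have : nth 0 h l < sumn (m l) by rewrite Hsum // Hh.
move/blk_spec => [H1 H2 _].
by rewrite /bsz !nth_blkidx // nth_blkoff.
Qed.

Lemma ivec_beta_lt h : valid h -> ivec b (blkidx m h) < Nprod b (size h).
Proof.
move=> Hv; rewrite -(size_blkidx h); apply: ivec_lt => l.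
rewrite size_blkidx => Hl; exact: (valid_blk Hv Hl).1.
Qed.

Lemma loc_lt h : valid h -> loc h < vol m (blkidx m h).
Proof.
move=> Hv; rewrite /loc /vol.
have -> : size (blkidx m h) = size (blkoff m h) by rewrite size_blkidx size_blkoff.
apply: ivec_lt => l; rewrite size_blkoff => Hl; exact: (valid_blk Hv Hl).2.
Qed.

Lemma vol_idecode_beta h : valid h ->
  vol m (idecode b (size h) (ivec b (blkidx m h))) = vol m (blkidx m h).
Proof.
move=> Hv; rewrite -(size_blkidx h) idecode_ivec // => l.
rewrite size_blkidx => Hl; exact: (valid_blk Hv Hl).1.
Qed.

Lemma Ssum_mono k a c : Ssum k a <= Ssum k (a + c).
Proof. by rewrite /Ssum big_split_ord /= leq_addr. Qed.

Lemma posM_lt h : valid h -> posM m h < Nprod n (size h).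
Proof.
move=> Hv; rewrite posM_dec.
have Hb := ivec_beta_lt Hv.
have Hs := Hv.1.
rewrite -Ssum_total //.
apply: (@leq_trans (Ssum (size h) (ivec b (blkidx m h)).+1)).
  rewrite /Ssum big_ord_recr /= vol_idecode_beta // ltn_add2l; exact: loc_lt.
by rewrite -(subnKC Hb) Ssum_mono.
Qed.

Lemma posM_rcons h x : valid h -> size h < D -> x < n (size h) ->
  posM m (rcons h x) =
    Nprod n (size h) * sumn (take (blk (m (size h)) x).1 (m (size h)))
    + Ssum (size h) (ivec b (blkidx m h)) * nth 0 (m (size h)) (blk (m (size h)) x).1
    + (loc h + (blk (m (size h)) x).2 * vol m (blkidx m h)).
Proof.
move=> Hv Hk Hx.
have : x < sumn (m (size h)) by rewrite Hsum.
move/blk_spec => [H1 H2 H3].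
rewrite posM_dec size_rcons blkidx_rcons ivec_rcons size_blkidx.
rewrite (addnC (ivec b (blkidx m h))) (mulnC _ (Nprod b (size h))).
have Hb := ltnW (ivec_beta_lt Hv).
rewrite Ssum_step // Ssum_blocks ?(ltnW H1) // Ssum_total ?(ltnW Hk) //.
congr (_ + _).
rewrite /loc blkidx_rcons blkoff_rcons ivec_rcons size_blkoff; congr (_ + _).
- apply: ivec_eq => l; rewrite size_blkoff -(size_blkidx h) => Hl.
  by rewrite /bsz nth_rcons Hl.
- congr (_ * _); rewrite /vol /Nprod size_blkidx; apply: eq_bigr => l _.
  by rewrite /bsz nth_rcons size_blkidx ltn_ord.
Qed.

End Blocks.

Lemma mixed_div q u v : 0 < q -> v < q -> (u * q + v) %/ q = u.
Proof. by move=> Hq Hv; rewrite divnMDl // divn_small // addn0. Qed.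
Lemma mixed_mod q u v : v < q -> (u * q + v) %% q = v.
Proof. by move=> Hv; rewrite modnMDl modn_small. Qed.

Section Mat.
Variable R : pzRingType.
Local Open Scope ring_scope.

Definition ColIs (M : smx R) (i y : nat) :=
  (y < msz M)%N /\ forall o, (o < msz M)%N -> ment M o i = (y == o)%:R.

Lemma ColIs_mid s i : (i < s)%N -> ColIs (mid s) i i.
Proof. by move=> Hi; split => // o /= ->; rewrite eq_sym. Qed.

Lemma ColIs_mmul (A B : smx R) i y z : msz A = msz B ->
  ColIs B i y -> ColIs A y z -> ColIs (mmul A B) i z.
Proof.
move=> HAB [HyB HB] [HzA HA]; split => // o Ho /=.
have HyA : (y < msz A)%N by rewrite HAB.
rewrite (bigD1 (Ordinal HyA)) //= HB // eqxx mulr1 HA // big1 ?addr0 // => t Ht.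
rewrite HB -?HAB ?ltn_ord //; case Hyt: (y == t) => /=; last by rewrite ?mulr0n mulr0.
by move: Ht; rewrite -val_eqE /= (eqP Hyt) eqxx.
Qed.

Lemma ColIs_shuffle q r i : (i < q * r)%N ->
  ColIs (mshuffle q r) i ((i %% r) * q + i %/ r).
Proof.
move=> Hi.
have Hqr : (0 < q * r)%N by exact: leq_ltn_trans Hi.
have Hq : (0 < q)%N by move: Hqr; rewrite muln_gt0 => /andP [].
have Hr : (0 < r)%N by move: Hqr; rewrite muln_gt0 => /andP [].
have Hir : (i %/ r < q)%N by rewrite ltn_divLR.
have Himr : (i %% r < r)%N by rewrite ltn_mod.
split.
  rewrite /=; apply: (@leq_trans ((i %% r).+1 * q)).
    by rewrite mulSn addnC ltn_add2r.
  by rewrite mulnC leq_mul2l Himr orbT.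
move=> o /= Ho; rewrite Ho Hi /=.
have Hoq : (o %/ q < r)%N by rewrite ltn_divLR // mulnC.
have Hom : (o %% q < q)%N by rewrite ltn_mod.
suff -> : (i == (o %% q) * r + o %/ q)%N = (((i %% r) * q + i %/ r)%N == o) by [].
apply/idP/idP => /eqP H; apply/eqP.
- by rewrite H mixed_mod // mixed_div // -divn_eq.
- by rewrite -H mixed_mod // mixed_div // -divn_eq.
Qed.

Lemma ColIs_kron a (G : smx R) i y : (i < a * msz G)%N ->
  ColIs G (i %% msz G) y -> ColIs (mkron_id a G) i (i %/ msz G * msz G + y).
Proof.
move=> Hi [Hy HG].
set s := msz G in Hi Hy HG *.
have Hs : (0 < s)%N.
  by move: (leq_ltn_trans (leq0n _) Hi); rewrite muln_gt0 => /andP [].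
have His : (i %/ s < a)%N by rewrite ltn_divLR // mulnC.
split.
  rewrite /=; apply: (@leq_trans ((i %/ s).+1 * s)); first by rewrite mulSn addnC ltn_add2r.
  by rewrite leq_mul2r His orbT.
move=> o /= Ho; rewrite Ho Hi /=.
case: eqP => Hd.
- rewrite HG ?ltn_mod //; congr (_%:R).
  by rewrite {2}(divn_eq o s) Hd eqn_add2l.
- case: eqP => // He; exfalso; apply: Hd.
  by rewrite -He mixed_div.
Qed.

Lemma msz_mbdiag (l : seq (smx R)) : msz (mbdiag l) = sumn (map (@msz R) l).
Proof. by elim: l => //= G l ->. Qed.

Lemma ColIs_bdiag (l : seq (smx R)) dflt j r y : (j < size l)%N ->
  (r < msz (nth dflt l j))%N -> ColIs (nth dflt l j) r y ->
  ColIs (mbdiag l) (sumn (take j (map (@msz R) l)) + r)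
                   (sumn (take j (map (@msz R) l)) + y).
Proof.
elim: l j => [|G l IH] j //= Hj.
case: j Hj => [|j] Hj /=.
- move=> Hr [Hy HG]; rewrite !add0n; split; first exact: ltn_addr.
  move=> o Ho /=; case: ifP => Hos; first by rewrite Hr HG.
  case: ifP => [Hsr|_]; first by move: (leq_ltn_trans Hsr Hr); rewrite ltnn.
  case: eqP => // Hyo; by move: Hos; rewrite -Hyo Hy.
- move=> Hr Hc.
  have [Hy' HD] := IH j Hj Hr Hc.
  split; first by rewrite -addnA ltn_add2l.
  move=> o Ho /=; rewrite -!addnA.
  have -> : (msz G + (sumn (take j [seq msz i | i <- l]) + r) < msz G)%N = false.
    by apply/negbTE; rewrite -leqNgt leq_addr.
  case: ifP => Hos.
  + case: eqP => // He; by move: Hos; rewrite -He ltnNge leq_addr.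
  + have Hso : (msz G <= o)%N by rewrite leqNgt Hos.
    rewrite leq_addr addKn HD.
    * by rewrite -[in RHS](subnKC Hso) eqn_add2l.
    * by rewrite -(ltn_add2l (msz G)) subnKC.
Qed.

End Mat.

Section Main.
Variable R : pzRingType.
Variable D : nat.
Variable n : nat -> nat.
Variable m : nat -> seq nat.
Hypothesis Hn : forall l, l < D -> 0 < n l.
Hypothesis Hsum : forall l, l < D -> sumn (m l) = n l.

Local Notation b := (bcount m).
Let Stot := Ssum_total Hn Hsum.
Let PMlt := posM_lt Hn Hsum.
Let IBlt := ivec_beta_lt Hsum.
Let Llt := loc_lt Hsum.
Let VolI := vol_idecode_beta Hsum.
Let PMr := posM_rcons Hn Hsum.

Lemma msz_Gammaj k j : k <= D ->
  msz (@Gammaj R n m k j) = Nprod n k * nth 0 (m k) j.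
Proof.
move=> Hk; rewrite /Gammaj /= msz_mbdiag -map_comp sumn_map_iota /=.
rewrite -big_distrl /= -/(Ssum m k (Nprod b k)) Stot //.
Qed.

Lemma ColIs_Gammaj h j off : valid D n h -> size h < D -> j < b (size h) ->
  off < nth 0 (m (size h)) j ->
  ColIs (@Gammaj R n m (size h) j) (posM m h + Nprod n (size h) * off)
    (Ssum m (size h) (ivec b (blkidx m h)) * nth 0 (m (size h)) j
      + (off * vol m (blkidx m h) + loc m h)).
Proof.
move=> Hv Hk Hj Hoff.
set k := size h; set mj := nth 0 (m k) j; set P := posM m h.
set beta := blkidx m h; set iv := ivec b beta.
have Hmj : 0 < mj by exact: leq_ltn_trans Hoff.
have HP : P < Nprod n k by apply: PMlt.
have HN : 0 < Nprod n k by exact: leq_ltn_trans HP.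
have Hiv : iv < Nprod b k by apply: IBlt.
have Hloc : loc m h < vol m beta by apply: Llt.
have Hvol := VolI Hv.
rewrite /Gammaj.
set L := [seq mshuffle _ mj | t <- _].
have HszL : sumn (map (@msz R) L) = Nprod n k * mj.
  rewrite -map_comp sumn_map_iota /= -big_distrl /= -/(Ssum m k (Nprod b k)).
  by rewrite Stot // ltnW.
apply: (@ColIs_mmul _ _ _ _ (P * mj + off)).
- by rewrite /= msz_mbdiag HszL mulnC.
- have Hi : P + Nprod n k * off < mj * Nprod n k.
    apply: (@leq_trans (Nprod n k * off.+1)); first by rewrite mulnS ltn_add2r.
    by rewrite mulnC leq_mul2r Hoff orbT.
  have := ColIs_shuffle R Hi.
  by rewrite addnC mulnC mixed_mod // mixed_div.
- have HPdec : P * mj + off = Ssum m k iv * mj + (loc m h * mj + off).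
    by rewrite /P posM_dec mulnDl addnA.
  have Hoffset : sumn (take iv (map (@msz R) L)) = Ssum m k iv * mj.
    rewrite /L -map_comp -map_take take_iota (minn_idPl (ltnW Hiv)) sumn_map_iota.
    by rewrite /Ssum big_distrl.
  have HnthL : nth (mid 0) L iv = mshuffle (vol m beta) mj.
    by rewrite (nth_map 0) ?size_iota // nth_iota // add0n Hvol.
  have Hr : loc m h * mj + off < msz (nth (mid 0) L iv).
    rewrite HnthL /=; apply: (@leq_trans ((loc m h).+1 * mj)).
      by rewrite mulSn addnC ltn_add2r.
    by rewrite leq_mul2r Hloc orbT.
  have Hcol : ColIs (nth (mid 0) L iv) (loc m h * mj + off) (off * vol m beta + loc m h).
    rewrite HnthL.
    have Hi : loc m h * mj + off < vol m beta * mj by move: Hr; rewrite HnthL.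
    by have := ColIs_shuffle R Hi; rewrite mixed_mod // mixed_div.
  have := ColIs_bdiag (l := L) (j := iv) _ Hr Hcol.
  rewrite Hoffset HPdec; apply.
  by rewrite size_map size_iota.
Qed.


Lemma msz_Gamma k : k < D -> msz (@Gamma R n m k) = Nprod n k.+1.
Proof.
move=> Hk; rewrite /Gamma msz_mbdiag -map_comp sumn_map_iota /=.
rewrite (eq_bigr (fun j : 'I_(size (m k)) => Nprod n k * nth 0 (m k) j)); last first.
  by move=> j _; rewrite msz_Gammaj // ltnW.
by rewrite -big_distrr /= -sumn_take_big take_size Hsum // NprodS.
Qed.

Lemma ColIs_Gamma h x : valid D n h -> size h < D -> x < n (size h) ->
  ColIs (@Gamma R n m (size h)) (posM m h + Nprod n (size h) * x) (posM m (rcons h x)).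
Proof.
move=> Hv Hk Hx.
set k := size h.
have : x < sumn (m k) by rewrite Hsum.
move/blk_spec => [H1 H2 H3].
set j := (blk (m k) x).1 in H1 H2 H3; set off := (blk (m k) x).2 in H2 H3.
rewrite PMr // -/k -/j -/off /Gamma.
set LG := [seq Gammaj n m k j0 | j0 <- _].
have Hoffset : sumn (take j (map (@msz R) LG)) = Nprod n k * sumn (take j (m k)).
  rewrite /LG -map_comp -map_take take_iota (minn_idPl (ltnW H1)) sumn_map_iota.
  rewrite sumn_take_big big_distrr /=; apply: eq_bigr => j' _.
  by rewrite msz_Gammaj // ltnW.
have Hnth : nth (mid 0) LG j = Gammaj n m k j.
  by rewrite (nth_map 0) ?size_iota // nth_iota.
have Hcol := @ColIs_Gammaj h j off Hv Hk H1 H2.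
have Hr : posM m h + Nprod n k * off < msz (nth (mid 0) LG j).
  rewrite Hnth msz_Gammaj; last exact: ltnW.
  have HP : posM m h < Nprod n k by apply: PMlt.
  apply: (@leq_trans (Nprod n k * off.+1)); first by rewrite mulnS ltn_add2r.
  by rewrite leq_mul2l H2 orbT.
rewrite -Hnth in Hcol.
have HjL : j < size LG by rewrite /LG size_map size_iota.
have HC := ColIs_bdiag HjL Hr Hcol.
rewrite Hoffset in HC.
have E1 : posM m h + Nprod n k * x =
  Nprod n k * sumn (take j (m k)) + (posM m h + Nprod n k * off).
  by rewrite H3 mulnDr addnCA.
have E2 : Nprod n k * sumn (take j (m k)) + Ssum m k (ivec b (blkidx m h)) * nth 0 (m k) j +
    (loc m h + off * vol m (blkidx m h)) =
  Nprod n k * sumn (take j (m k)) +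
    (Ssum m k (ivec b (blkidx m h)) * nth 0 (m k) j + (off * vol m (blkidx m h) + loc m h)).
  by rewrite -addnA (addnC (loc m h)).
by rewrite E1 E2.
Qed.

Lemma Nprod_splitD k : k < D ->
  Nprod n D = \prod_(k.+1 <= j < D) n j * Nprod n k.+1.
Proof.
move=> Hk; rewrite /Nprod -!(big_mkord xpredT) (big_cat_nat (leq0n k.+1) Hk).
by rewrite mulnC.
Qed.

Lemma msz_Qk k : k < D -> msz (@Qk R D n m k) = Nprod n D.
Proof.
move=> Hk; rewrite /Qk; case: eqP => // _ /=.
by rewrite msz_Gamma // (Nprod_splitD Hk).
Qed.

Lemma valid_idecode k i : k <= D -> valid D n (idecode n k i).
Proof.
move=> Hk; split; first by rewrite size_idecode.
move=> l; rewrite size_idecode => Hl; rewrite /idecode nth_mkseq // ltn_mod Hn //.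
exact: leq_trans Hl Hk.
Qed.

Lemma prodQ_main k : 0 < k -> k <= D ->
  msz (@prodQ R D n m k) = Nprod n D /\
  forall i, i < Nprod n D -> ColIs (@prodQ R D n m k) i
     (posM m (idecode n k i) + Nprod n k * (i %/ Nprod n k)).
Proof.
elim: k => [//|k IH] _ Hk.
case: k IH Hk => [|k] IH Hk.
- split; first by [].
  move=> i Hi.
  have Hn0 : 0 < n 0 by apply: Hn.
  have -> : posM m (idecode n 1 i) + Nprod n 1 * (i %/ Nprod n 1) = i.
    rewrite idecodeS Nprod0 divn1 NprodS Nprod0 mul1n.
    have Hx : i %% n 0 < n 0 by rewrite ltn_mod.
    have := @PMr [::] (i %% n 0) (@valid_idecode 0 0 (leq0n D)) Hk Hx.
    rewrite /= => ->.
    have : i %% n 0 < sumn (m 0) by rewrite Hsum.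
    move/blk_spec => [_ _ H3].
    rewrite Nprod0 mul1n /Ssum /ivec !big_ord0 mul0n addn0 /loc /ivec big_ord0 add0n.
    rewrite /vol big_ord0 muln1 -H3 mulnC addnC -divn_eq //.
  exact: ColIs_mid.
- have [Hsz Hcol] := IH erefl (ltnW Hk).
  set k1 := k.+1 in Hk Hsz Hcol *.
  have HQ : msz (@Qk R D n m k1) = Nprod n D by apply: msz_Qk.
  split; first exact: HQ.
  move=> i Hi; apply: (ColIs_mmul _ (Hcol i Hi)); first by rewrite HQ Hsz.
  set h := idecode n k1 i.
  have Hv : valid D n h by apply: valid_idecode; exact: ltnW.
  have Hsh : size h = k1 by rewrite size_idecode.
  set N := Nprod n k1.
  set q := i %/ N.
  have HP : posM m h < N by rewrite /N -Hsh; apply: PMlt.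
  have HN : 0 < N by exact: leq_ltn_trans HP.
  have Hnk : 0 < n k1 by apply: Hn.
  set x := q %% n k1; set q' := q %/ n k1.
  have Hx : x < n k1 by rewrite ltn_mod.
  set s := N * n k1.
  have Hs : 0 < s by rewrite muln_gt0 HN Hnk.
  have Hlow : posM m h + N * x < s.
    apply: (@leq_trans (N * x.+1)); first by rewrite mulnS ltn_add2r.
    by rewrite leq_mul2l Hx orbT.
  have Hy : posM m h + N * q = q' * s + (posM m h + N * x).
    rewrite {1}(divn_eq q (n k1)) -/q' -/x mulnDr addnCA; congr (_ + _).
    by rewrite /s mulnCA mulnC.
  have HyD : posM m h + N * q < Nprod n D by move: (Hcol i Hi).1; rewrite Hsz.
  have HGs : msz (@Gamma R n m k1) = s by rewrite msz_Gamma // NprodS.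
  rewrite /Qk /= -/N.
  have HyD' : posM m h + N * q < \prod_(k1.+1 <= j < D) n j * msz (@Gamma R n m k1).
    by rewrite HGs /s -NprodS -(Nprod_splitD Hk).
  have HGcol : ColIs (@Gamma R n m k1) ((posM m h + N * q) %% msz (@Gamma R n m k1))
      (posM m (rcons h x)).
    rewrite HGs Hy mixed_mod // /N -Hsh.
    apply: ColIs_Gamma => //; rewrite Hsh //.
  have := ColIs_kron HyD' HGcol.
  rewrite HGs Hy mixed_div // idecodeS -/h -/N -/q -/x NprodS -/N -/s.
  have -> : i %/ s = q' by rewrite /s divnMA.
  by rewrite (addnC (posM m (rcons h x)) (s * q')) (mulnC s q').
Qed.

End Main.

Import Num.Theory.
Local Open Scope ring_scope.

Theorem theorem3p1 (R : realFieldType) (d : nat) (n : nat -> nat)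
    (m : nat -> seq nat) (A : seq nat -> R) :
  (0 < d)%N ->
  (forall k, (k < d)%N -> (0 < n k)%N) ->
  (forall k, (k < d)%N -> all (fun x => 0 < x)%N (m k) /\ sumn (m k) = n k) ->
  tvecM d n m A = tomx (Nprod n d) (PM d n m) *m tvec d n A.
Proof.
move=> Hd Hn Hm.
have Hsum : forall l, (l < d)%N -> sumn (m l) = n l by move=> l Hl; case: (Hm l Hl).
have [Hsz Hcol] := prodQ_main R Hn Hsum Hd (leqnn d).
apply/matrixP => o z; rewrite !mxE.
apply: eq_bigr => i _; rewrite !mxE.
rewrite (Hcol i (ltn_ord i)).2; last by rewrite Hsz ltn_ord.
by rewrite divn_small // muln0 addn0.
Qed.
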